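(* Let $q = 2^\ell$ with $\ell \geq 1$, and let $\alpha,\beta \in \mathbb{F}_{q^2}$ be such that the line $\{(\alpha t+\beta, t)\}$ is not tangent to the Hermitian curve $x^q+x=y^{q+1}$. Let $\gamma = \beta+\beta^q$, let $\sigma_0,\dots,\sigma_q$ be the roots of $p(t) = t^{q+1} + \alpha^q t^q + \alpha t + \gamma$, and $P_k = \sum_{i=0}^q \sigma_i^k$. Let $\Gamma$ be the $q\times q$ matrix whose entry in row $i$ and column $j$ (indices $0 \le i,j \le q-1$) is $P_{jq+i}$. Then $$\Gamma = \begin{pmatrix} 1 & \alpha^{2^{\ell-1}} \\ \alpha^{2^{\ell-1}q} & \gamma^{2^{\ell-1}}\end{pmatrix} \otimes \begin{pmatrix} 1 & \alpha^{2^{\ell-2}} \\ \alpha^{2^{\ell-2}q} & \gamma^{2^{\ell-2}}\end{pmatrix}\otimes \cdots \otimes \begin{pmatrix} 1 & \alpha^{2} \\ \alpha^{2q} & \gamma^{2}\end{pmatrix} \otimes \begin{pmatrix} 1 & \alpha \\ \alpha^{q} & \gamma\end{pmatrix},$$ where $\otimes$ denotes the Kronecker product.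
   Context: For an $r\times s$ matrix $A=[a_{ij}]$ and an $m_1 \times m_2$ matrix $B$, the Kronecker product $A\otimes B$ is the $rm_1 \times s m_2$ block matrix whose $(i,j)$ block is $a_{ij}B$. *)

(* Defs.v *)
From HB Require Import structures.
From mathcomp Require Import all_boot all_order all_algebra.
Set Implicit Arguments. Unset Strict Implicit. Unset Printing Implicit Defensive.
Import GRing.Theory.
Local Open Scope ring_scope.

Definition kron {R : pzRingType} {m1 n1 m2 n2 : nat}
  (A : 'M[R]_(m1, n1)) (B : 'M[R]_(m2, n2)) :
  'M[R]_(\sum_(i < m1) m2, \sum_(j < n1) n2) :=
  @mxblock R m1 n1 (fun _ => m2) (fun _ => n2) (fun i j => A i j *: B).

Lemma sum2_exp2 (k : nat) : (\sum_(i < 2) 2 ^ k)%N = (2 ^ k.+1)%N.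
Proof. by rewrite big_ord_recr big_ord_recr big_ord0 /= add0n expnS mul2n addnn. Qed.

Definition kfactor {R : pzRingType} (q : nat) (a g : R) (k : nat) : 'M[R]_2 :=
  \matrix_(i < 2, j < 2)
    (if (i == 0 :> nat) && (j == 0 :> nat) then 1
     else if (i == 0 :> nat) then a ^+ (2 ^ k)
     else if (j == 0 :> nat) then a ^+ (2 ^ k * q)
     else g ^+ (2 ^ k)).

Fixpoint kchain {R : pzRingType} (q : nat) (a g : R) (l : nat) : 'M[R]_(2 ^ l) :=
  match l with
  | 0 => 1%:M
  | k.+1 => castmx (sum2_exp2 k, sum2_exp2 k) (kron (kfactor q a g k) (kchain q a g k))
  end.

Definition herm_F {L : pzRingType} (q : nat) (x y : L) : L := x ^+ q + x - y ^+ q.+1.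
Definition herm_Fx {L : pzRingType} (q : nat) (x y : L) : L := q%:R * x ^+ q.-1 + 1.
Definition herm_Fy {L : pzRingType} (q : nat) (x y : L) : L := - (q.+1)%:R * y ^+ q.

(* The line {(a t + b, t)} is tangent to the Hermitian curve at a point
   (over L): some point of the line lies on the curve and the direction
   vector (a,1) of the line is annihilated by the gradient of F there. *)
Definition line_tangent_herm {L : pzRingType} (q : nat) (a b : L) : Prop :=
  exists t : L, herm_F q (a * t + b) t = 0 /\
    a * herm_Fx q (a * t + b) t + herm_Fy q (a * t + b) t = 0.

(* Main.v *)
Require Import Defs.
From HB Require Import structures.
From mathcomp Require Import all_boot all_order all_algebra.
From mathcomp Require Import finfield.
From mathcomp Require Import zify ring.
Set Implicit Arguments. Unset Strict Implicit. Unset Printing Implicit Defensive.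
Import GRing.Theory.
Local Open Scope ring_scope.

Section Char2.
Variable R : comPzRingType.
Hypothesis h2 : (2%:R : R) = 0.

Lemma c2_add x : x + x = 0 :> R.
Proof. by rewrite -mulr2n -mulr_natr h2 mulr0. Qed.

Lemma c2_opp x : - x = x :> R.
Proof. by rewrite -[LHS]addr0 -(c2_add x) addrA addNr add0r. Qed.

Lemma frob2 x y k : (x + y) ^+ (2 ^ k) = x ^+ (2 ^ k) + y ^+ (2 ^ k) :> R.
Proof.
elim: k => [|k IH]; first by rewrite !expr1.
rewrite expnS mulnC !exprM IH sqrrD.
by rewrite -mulr_natr h2 mulr0 addr0.
Qed.
End Char2.

Lemma deriv_prodXsubC (L : fieldType) (s : seq L) :
  (\prod_(x <- s) ('X - x%:P))^`() =
  \sum_(x <- s) \prod_(z <- rem x s) ('X - z%:P).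
Proof.
elim: s => [|a t IH]; first by rewrite !big_nil derivC.
rewrite big_cons derivM derivXsubC mul1r IH big_cons /= eqxx.
congr (_ + _).
rewrite mulr_sumr big_seq_cond [RHS]big_seq_cond.
apply: eq_bigr => x /andP[xt _] /=.

case: ifP => [/eqP ->|_]; last by rewrite big_cons.
by rewrite [in RHS](perm_big _ (perm_to_rem xt)) big_cons.
Qed.

Lemma psum_zero (L : fieldType) (ys : seq L) (n : nat) (c : L) :
  \prod_(y <- ys) ('X - y%:P) = 'X^n - c%:P ->
  forall e, (0 < e < n)%N -> \sum_(y <- ys) y ^+ e = 0.
Proof.
move=> hP e /andP[e0 en].
have hroot y : y \in ys -> y ^+ n = c.
  move=> yin; have := congr1 (horner^~ y) hP.
  rewrite (perm_big _ (perm_to_rem yin)) big_cons hornerM !hornerE subrr mul0r.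
  by move/esym/eqP; rewrite subr_eq0 => /eqP.
have hrem y : y \in ys -> \prod_(z <- rem y ys) ('X - z%:P) =
    \sum_(i < n) 'X^(n.-1 - i) * (y ^+ i)%:P.
  move=> yin; apply: (@mulfI _ ('X - y%:P)); first by rewrite polyXsubC_eq0.
  transitivity (\prod_(z <- ys) ('X - z%:P)).
    by rewrite [RHS](perm_big _ (perm_to_rem yin)) big_cons.
  rewrite hP -(hroot y yin).
  by rewrite rmorphXn subrXX; congr (_ * _); apply: eq_bigr => i _; rewrite rmorphXn.
have := congr1 (fun p => (deriv p)`_(n.-1 - e)) hP => /=.
rewrite deriv_prodXsubC derivB derivC subr0 derivXn coefMn coefXn.
have -> : (n.-1 - e == n.-1)%N = false by apply/eqP; lia.
rewrite mul0rn coef_sum => h; apply: etrans _ h.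
apply: eq_big_seq => y yin; rewrite hrem // coef_sum.
rewrite (bigD1 (Ordinal en)) //= big1 ?addr0.
  by rewrite coefMC coefXn eqxx mul1r.
move=> i /eqP ne; rewrite coefMC coefXn.
have -> : (n.-1 - e == n.-1 - i)%N = false.
  apply/eqP => h'; apply: ne; apply: val_inj => /=; have := ltn_ord i; lia.
by rewrite mul0r.
Qed.

Definition kf {R : pzRingType} (q : nat) (al ga : R) (m ib jb : nat) : R :=
  if (ib == 0%N) && (jb == 0%N) then 1
  else if ib == 0%N then al ^+ (2 ^ m)
  else if jb == 0%N then al ^+ (2 ^ m * q)
  else ga ^+ (2 ^ m).

Fixpoint Tg {R : pzRingType} (q : nat) (al ga : R) (m i j : nat) : R :=
  match m with
  | 0 => 1
  | m'.+1 => kf q al ga m' (i %/ 2 ^ m') (j %/ 2 ^ m') *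
             Tg q al ga m' (i %% 2 ^ m') (j %% 2 ^ m')
  end.

Section Supp.
Variable L : fieldType.
Variable q : nat.

Definition good (M k : nat) : Prop :=
  exists u v, [/\ (u < M)%N, (v < M)%N, u != v & k = (u + q * v)%N].

Definition supp (M : nat) (p : {poly L}) : Prop := forall k, p`_k != 0 -> good M k.

Lemma supp0 M : supp M 0.
Proof. by move=> k; rewrite coef0 eqxx. Qed.

Lemma suppD M p r : supp M p -> supp M r -> supp M (p + r).
Proof.
move=> hp hr k; rewrite coefD.
case: (eqVneq p`_k 0) => [->|/hp //]; rewrite add0r; exact: hr.
Qed.

Lemma suppZ M c p : supp M p -> supp M (c *: p).
Proof.
move=> hp k; rewrite coefZ; case: (eqVneq p`_k 0) => [->|/hp //].
by rewrite mulr0 eqxx.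
Qed.

Lemma supp_mono M N p : (M <= N)%N -> supp M p -> supp N p.
Proof.
move=> hMN hp k /hp [u [v [hu hv huv ->]]].
exists u, v; split => //; apply: leq_trans hMN; done.
Qed.

Lemma supp_XA M : (0 < M)%N -> supp (2 * M) 'X^M.
Proof.
move=> hM k; rewrite coefXn; case: (eqVneq k M) => [->|]; last by rewrite eqxx.
move=> _; exists M, 0%N; split; [lia|lia|by rewrite -lt0n|lia].
Qed.

Lemma supp_XB M : (0 < M)%N -> supp (2 * M) 'X^(q * M).
Proof.
move=> hM k; rewrite coefXn; case: (eqVneq k (q * M)%N) => [->|]; last by rewrite eqxx.
move=> _; exists 0%N, M; split; [lia|lia|by rewrite eq_sym -lt0n|lia].
Qed.

Lemma supp_shA M p : supp M p -> supp (2 * M) ('X^M * p).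
Proof.
move=> hp k; rewrite coefXnM; case: ltnP => [_|hk]; first by rewrite eqxx.
move=> /hp [u [v [hu hv huv he]]].
exists (u + M)%N, v; split; [lia|lia| |lia].
apply/eqP => h; lia.
Qed.

Lemma supp_shB M p : supp M p -> supp (2 * M) ('X^(q * M) * p).
Proof.
move=> hp k; rewrite coefXnM; case: ltnP => [_|hk]; first by rewrite eqxx.
move=> /hp [u [v [hu hv huv he]]].
exists u, (v + M)%N; split; [lia|lia| |lia].
apply/eqP => h; lia.
Qed.

End Supp.

Section Main.
Variable L : fieldType.
Hypothesis h2 : (2%:R : L) = 0.
Variables (q : nat) (b g : L).
Let a := b ^+ q.
Let c := a * b + g.

Lemma U_decomp m ib jb : (ib < 2)%N -> (jb < 2)%N ->
  exists v1 v2, forall y, y ^+ q.+1 = c ->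
   (y ^+ (2 ^ m) + a ^+ (2 ^ m)) ^+ ib * (y ^+ (q * 2 ^ m) + b ^+ (2 ^ m)) ^+ jb
   = kf q b g m ib jb + v1 * y ^+ (2 ^ m) + v2 * y ^+ (q * 2 ^ m).
Proof.
rewrite /kf; case: ib => [|[|//]] _; case: jb => [|[|//]] _ /=.
- by exists 0, 0 => y _; rewrite !mul0r !addr0 !expr0 mulr1.
- by exists 0, 1 => y _; rewrite mul0r addr0 mul1r expr0 expr1 mul1r addrC.
- exists 1, 0 => y _; rewrite mul0r addr0 mul1r expr0 expr1 mulr1 addrC.
  by rewrite /a -exprM mulnC.
- exists (b ^+ (2 ^ m)), (a ^+ (2 ^ m)) => y hy; rewrite !expr1.
  have e1 : y ^+ (2 ^ m) * y ^+ (q * 2 ^ m) = c ^+ (2 ^ m).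
    by rewrite -exprD -hy -exprM; congr (_ ^+ _); lia.
  have e2 : c ^+ (2 ^ m) + (a * b) ^+ (2 ^ m) = g ^+ (2 ^ m).
    by rewrite -frob2 // /c addrAC c2_add // add0r.
  rewrite -e2 -e1 exprMn; ring.
Qed.

Lemma main_ind m i j : (i < 2 ^ m)%N -> (j < 2 ^ m)%N ->
  exists R, supp q (2 ^ m) R /\ forall y, y ^+ q.+1 = c ->
    (y + a) ^+ i * (y ^+ q + b) ^+ j = Tg q b g m i j + R.[y].
Proof.
elim: m i j => [|m IH] i j.
  rewrite expn0 => /[!ltnS] /[!leqn0] /eqP -> /eqP ->.
  by exists 0; split; [exact: supp0|move=> y _; rewrite !expr0 horner0 addr0 mulr1].
move=> hi hj.
have hM : (0 < 2 ^ m)%N by rewrite expn_gt0.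
have [R' [hR' hyR']] := IH (i %% 2 ^ m)%N (j %% 2 ^ m)%N (ltn_pmod _ hM) (ltn_pmod _ hM).
have hib : (i %/ 2 ^ m < 2)%N by rewrite ltn_divLR // -expnS.
have hjb : (j %/ 2 ^ m < 2)%N by rewrite ltn_divLR // -expnS.
have [v1 [v2 hU]] := U_decomp m hib hjb.
set T' := Tg q b g m (i %% 2 ^ m) (j %% 2 ^ m).
set k := kf q b g m (i %/ 2 ^ m) (j %/ 2 ^ m).
exists (k *: R' + T' *: (v1 *: 'X^(2 ^ m) + v2 *: 'X^(q * 2 ^ m))
        + v1 *: ('X^(2 ^ m) * R') + v2 *: ('X^(q * 2 ^ m) * R')); split.
  rewrite expnS; apply: suppD; [apply: suppD; [apply: suppD|]|].
  - by apply: (@supp_mono _ _ (2 ^ m)); [lia|exact: suppZ].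
  - by apply: suppZ; apply: suppD; apply: suppZ; [apply: supp_XA|apply: supp_XB].
  - by apply: suppZ; apply: supp_shA.
  - by apply: suppZ; apply: supp_shB.
move=> y hy /=.
rewrite {1}(divn_eq i (2 ^ m)) {1}(divn_eq j (2 ^ m)) !exprD.
rewrite (mulnC (i %/ _)%N) (mulnC (j %/ _)%N) !exprM !frob2 // -(exprM y q).
rewrite mulrACA (hU y hy) (hyR' y hy) -/T' -/k -!exprM !(hornerD, hornerZ, hornerM, hornerXn); ring.
Qed.
End Main.

Section Sums.
Variables (L : fieldType) (q : nat) (c : L) (ys : seq L).
Hypothesis hy : forall y, y \in ys -> y ^+ q.+1 = c.
Hypothesis hz : forall e, (0 < e < q.+1)%N -> \sum_(y <- ys) y ^+ e = 0.

Lemma sum_good k : good q q k -> \sum_(y <- ys) y ^+ k = 0.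
Proof.
move=> [u [v [hu hv huv ->]]].
have [t [r [hr0 hrq ->]]] : exists t r, [/\ (0 < r)%N, (r < q.+1)%N & (u + q * v = q.+1 * t + r)%N].
  case: (ltngtP v u) => h.
  - by exists v, (u - v)%N; split; lia.
  - by exists v.-1, (q.+1 + u - v)%N; split; nia.
  - by move: huv; rewrite h eqxx.
rewrite (eq_big_seq (fun y => c ^+ t * y ^+ r)); first by rewrite -mulr_sumr hz ?mulr0 ?hr0.
by move=> y yin; rewrite exprD exprM hy.
Qed.

Lemma sum_const_seq (T : eqType) (s : seq T) (x : L) : \sum_(y <- s) x = x * (size s)%:R.
Proof. by elim: s => [|a s IH]; rewrite ?big_nil ?mulr0 // big_cons IH /= mulrS; ring. Qed.

Lemma sum_final (hsz : (size ys)%:R = 1 :> L) t R : supp q q R ->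
  \sum_(y <- ys) (t + R.[y]) = t.
Proof.
move=> hR; rewrite big_split /= sum_const_seq hsz mulr1.
under eq_bigr => y _ do rewrite horner_coef.
rewrite exchange_big /= big1 ?addr0 // => k _.
rewrite -mulr_sumr; case: (eqVneq R`_k 0) => [->|/hR /sum_good ->]; by rewrite ?mul0r ?mulr0.
Qed.
End Sums.

Lemma sum_if_lt (m : nat) (s : 'I_2) :
  (\sum_(k < 2 | (k < s)%N) 2 ^ m)%N = (s * 2 ^ m)%N.
Proof.
case: s => [[|[|//]] hs] /=; rewrite big_mkcond big_ord_recr big_ord_recr big_ord0 /=; lia.
Qed.

Lemma kchainE (F : pzRingType) q (al ga : F) m (i j : 'I_(2 ^ m)) :
  kchain q al ga m i j = Tg q al ga m i j.
Proof.
elim: m i j => [|m IH] i j.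
  by rewrite /= mxE; case: i j => [[|//] ?] [[|//] ?].
rewrite /= castmxE /kron mxE mxE IH.
set i' := cast_ord _ i; set j' := cast_ord _ j.
have hM : (0 < 2 ^ m)%N by rewrite expn_gt0.
have ei := tagnat.rect i'; have ej := tagnat.rect j'.
rewrite sum_if_lt in ei; rewrite sum_if_lt in ej.
have hi : (nat_of_ord i = i')%N by [].
have hj : (nat_of_ord j = j')%N by [].
have si2 := ltn_ord (tagnat.sig2 i'); have sj2 := ltn_ord (tagnat.sig2 j').
have -> : (i %/ 2 ^ m = tagnat.sig1 i')%N.
  by rewrite hi ei divnMDl // divn_small // addn0.
have -> : (j %/ 2 ^ m = tagnat.sig1 j')%N.
  by rewrite hj ej divnMDl // divn_small // addn0.
have -> : (i %% 2 ^ m = tagnat.sig2 i')%N.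
  by rewrite hi ei modnMDl modn_small.
have -> : (j %% 2 ^ m = tagnat.sig2 j')%N.
  by rewrite hj ej modnMDl modn_small.
by rewrite /kfactor mxE.
Qed.

Lemma Tg_rmorph (F L : nzRingType) (f : {rmorphism F -> L}) q (al ga : F) m i j :
  f (Tg q al ga m i j) = Tg q (f al) (f ga) m i j.
Proof.
elim: m i j => [|m IH] i j /=; first by rewrite rmorph1.
rewrite rmorphM IH /kf; congr (_ * _).
by case: ifP => _; [rewrite rmorph1|case: ifP => _; [|case: ifP => _]; rewrite rmorphXn].
Qed.

Lemma root_of_prod (L : fieldType) (ys : seq L) P y :
  \prod_(z <- ys) ('X - z%:P) = P -> y \in ys -> P.[y] = 0.
Proof.
move=> <- yin; rewrite (perm_big _ (perm_to_rem yin)) big_cons hornerM.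
by rewrite hornerD hornerN hornerX hornerC subrr mul0r.
Qed.

Lemma comp_prod (L : fieldType) (s : seq L) r :
  (\prod_(x <- s) ('X - x%:P)) \Po r = \prod_(x <- s) (r - x%:P).
Proof.
elim: s => [|x s IH]; first by rewrite !big_nil comp_polyC.
by rewrite !big_cons comp_polyM IH comp_polyB comp_polyX comp_polyC.
Qed.

Unset Implicit Arguments.
Set Strict Implicit.

Theorem mainTheorem6 (l : nat) (hl : (1 <= l)%N)
  (F : finFieldType) (hF : #|F| = ((2 ^ l) ^ 2)%N)
  (L : fieldType) (iota : {rmorphism F -> L})
  (alpha beta : F)
  (s : seq L) (hs : size s = (2 ^ l).+1)
  (hsplit : map_poly iota
              ('X ^+ (2 ^ l).+1 + (alpha ^+ (2 ^ l))%:P * 'X ^+ (2 ^ l)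
               + alpha%:P * 'X + (beta + beta ^+ (2 ^ l))%:P)
            = \prod_(x <- s) ('X - x%:P))
  (hnt : ~ line_tangent_herm (2 ^ l) (iota alpha) (iota beta)) :
  (\matrix_(i < 2 ^ l, j < 2 ^ l) \sum_(x <- s) x ^+ (j * 2 ^ l + i))
  = map_mx iota (kchain (2 ^ l) alpha (beta + beta ^+ (2 ^ l)) l).
Proof.
set q := (2 ^ l)%N in hF hs hsplit hnt *.
have h2F : 2%N \in [pchar F].
  by apply: (@card_finPcharP _ 2 (l * 2)) => //; rewrite hF expnM.
have h2L : (2%:R : L) = 0 by apply: pcharf0; exact: rmorph_pchar h2F.
have h2P : (2%:R : {poly L}) = 0 by rewrite -polyC_natr h2L.
set b := iota alpha; set g := iota (beta + beta ^+ q).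
set a := b ^+ q; set c := a * b + g.
have hbqq : a ^+ q = b.
  by rewrite /a -exprM /b -rmorphXn mulnn -hF expf_card.
have hPl : \prod_(x <- s) ('X - x%:P) =
    'X ^+ q.+1 + a%:P * 'X ^+ q + b%:P * 'X + g%:P.
  rewrite -hsplit !rmorphD !rmorphM /= !map_polyXn !map_polyC map_polyX /a /b /g !rmorphXn rmorphD polyCD.
  by rewrite -(rmorphXn polyC) -(rmorphXn iota).
set ys := map (fun x => x + a) s.
have hys : \prod_(y <- ys) ('X - y%:P) = 'X ^+ q.+1 - c%:P.
  rewrite big_map.
  transitivity (\prod_(x <- s) ('X - a%:P - x%:P)).
    by apply: eq_bigr => x _; rewrite polyCD opprD addrA addrAC.
  rewrite -comp_prod hPl !comp_polyD !comp_polyM !comp_polyC comp_polyX.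
  rewrite !rmorphXn /= comp_polyX.
rewrite -(rmorphXn polyC) -/a (c2_opp h2P a%:P) (c2_opp h2P c%:P) exprS /q frob2 // -/q.
  rewrite -(rmorphXn polyC) hbqq /c polyCD polyCM exprSr.
  transitivity ('X^q * 'X + (a%:P * b%:P + g%:P) +
     2%:R * (b%:P * 'X + a%:P * 'X^q + a%:P * b%:P)); first by ring.
  by rewrite h2P mul0r addr0.
have hsz : (size ys)%:R = 1 :> L.
  rewrite size_map hs -addn1 natrD /q natrX h2L expr0n.
  have hl0 : (l == 0%N) = false by apply/eqP; lia.
  by rewrite hl0 add0r.
have hroot y : y \in ys -> y ^+ q.+1 = c.
  move=> yin; have := root_of_prod hys yin.
  by rewrite hornerD hornerN hornerXn hornerC => /eqP; rewrite subr_eq0 => /eqP.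
have hz := psum_zero hys.
apply/matrixP => i j; rewrite !mxE kchainE Tg_rmorph -/b -/g.
have [R [hR hRy]] := main_ind h2L q b g (ltn_ord i) (ltn_ord j).
transitivity (\sum_(y <- ys) (Tg q b g l i j + R.[y])); last first.
  exact: (sum_final hroot hz hsz).
rewrite big_map; apply: eq_big_seq => x xin.
rewrite -hRy; last by apply: hroot; apply: map_f.
rewrite -addrA c2_add // addr0 /q frob2 // -/q hbqq -addrA c2_add // addr0.
by rewrite exprD -exprM mulnC mulrC.
Qed.
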